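(* Given a parity game with $d$ priorities, $n$ vertices and $m$ edges, searching for tangles in the top-down $\alpha$-maximal decomposition (i.e. applying extract-tangles, defined in the context, to each region of the decomposition) runs in time $O(dm)$.
   Context: Parity games: $\mathcal{G}=(V_0,V_1,E,\mathrm{pr})$, $V=V_0\cup V_1$ finite, partitioned into vertices of Even ($0$) and Odd ($1$); $E\subseteq V\times V$ with every vertex having a successor; $\mathrm{pr}:V\to\{0,\dots,d\}$. $E(u)=\{v:(u,v)\in E\}$, $\mathrm{pr}(U)=\max_{u\in U}\mathrm{pr}(u)$, $\mathrm{pr}^{-1}(p)$ the set of vertices of priority $p$, $\overline{\alpha}=1-\alpha$. A cycle is won by $\alpha$ if its highest priority has parity $\alpha$. A strategy of $\alpha$ is a partial function $\sigma$ on $V_\alpha$ with $\sigma(v)\in E(v)$. For $U\subseteq V$, $\mathcal{G}\setminus U$ is the subgame with vertices $V\setminus U$ and edges $E\cap((V\setminus U)\times(V\setminus U))$. A $p$-tangle is a nonempty $U\subseteq V$ with $p=\mathrm{pr}(U)$ such that for $\alpha\equiv p\pmod 2$ there is a strategy $\sigma:U\cap V_\alpha\to U$ (witness strategy $\sigma_T(U)$) with $(U,E\cap(\sigma\cup((U\cap V_{\overline{\alpha}})\times U)))$ strongly connected and all its cycles won by $\alpha$. For a tangle $t$ won by $\alpha$ in a game with edge set $E$, $E_T(t)=\{v\notin t:\exists u\in t\cap V_{\overline{\alpha}},(u,v)\in E\}$; $T_\alpha$ denotes the tangles of $T$ won by $\alpha$. Tangle attractor: $\mathit{TAttr}^{\mathcal{G},T}_\alpha(A)$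 is the least $Z\supseteq A$ containing every $v\in V_\alpha$ with $E(v)\cap Z\neq\emptyset$, every $v\in V_{\overline{\alpha}}$ with $E(v)\subseteq Z$, and every vertex of every $t\in T_\alpha$ with $\emptyset\neq E_T(t)\subseteq Z$, computed together with a strategy $\sigma$ of $\alpha$ (individually attracted $\alpha$-vertices are mapped to a successor in $Z$, $\alpha$-vertices of $A$ to a successor in $Z$ once one exists, $\alpha$-vertices of an attracted tangle $t$ not yet having a strategy get $\sigma_T(t)$). Top-down $\alpha$-maximal decomposition of $\mathcal{G}$ w.r.t. a set of tangles $T$: repeatedly let $\mathcal{G}'=(V',E')$ be $\mathcal{G}$ minus all vertices in already computed regions, $p=\mathrm{pr}(\mathcal{G}')$, $\alpha=p\bmod 2$, and compute the next region $(Z,\sigma)=\mathit{TAttr}^{\mathcal{G}',T'}_\alpha(\mathrm{pr}^{-1}(p)\cap V')$ with $T'$ the tangles of $T$ inside $V'$, until every vertex lies in a region. extract-tangles$(Z,\sigma)$ for such a region: let $Y$ be the greatest $X\subseteq Z$ such that every $v\in X\cap V_{\overline{\alpha}}$ has $E'(v)\subseteq X$ and every $v\in X\cap V_\alpha$ has $\sigma(v)\in X$; let $H$ be the graph on $Y$ with edges $(v,\sigma(v))$ for $v\in Y\cap V_\alpha$ and $(v,w)\in E'$ for $v\in Y\cap V_{\overline{\alpha}}$; return all bottom strongly connected components of $H$ containing at least one edge. *)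

(* Defs.v *)
From mathcomp Require Import all_boot.

Set Implicit Arguments.
Unset Strict Implicit.
Unset Printing Implicit Defensive.

(* Parity games.  A game is given by a finite vertex type V, an owner map    *)
(* (owner v = false : v is a vertex of Even (player 0), owner v = true : v   *)
(* is a vertex of Odd (player 1)), an edge relation E and a priority map pr. *)
(* Players are booleans; the player of priority p is odd p.                  *)
(* Subgames are represented by their vertex set W : {set V}; the edges of    *)
(* the subgame are the edges of E with both endpoints in W.                  *)

Section ParityGames.
Variable V : finType.
Variable owner : V -> bool.
Variable E : rel V.
Variable pr : V -> nat.

Definition maxpr (U : {set V}) : nat := \max_(u in U) pr u.

Definition tangle_edge (U : {set V}) (a : bool) (s : V -> option V) : rel V :=
  fun u w => [&& u \in U, w \in U &
                 if owner u == a then (s u == Some w) && E u w else E u w].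

Definition is_tangle (U : {set V}) (s : V -> option V) : Prop :=
  let a := odd (maxpr U) in
  [/\ U != set0,
      (forall v, v \in U -> owner v = a ->
          exists2 w, s v = Some w & (w \in U) && E v w),
      (forall u w, u \in U -> w \in U -> connect (tangle_edge U a s) u w) &
      (forall c : seq V, c != [::] -> cycle (tangle_edge U a s) c ->
          odd (\max_(x <- c) pr x) = a)].

Definition tangle_escape (W t : {set V}) : {set V} :=
  let a := odd (maxpr t) in
  [set v in W | (v \notin t) &&
                [exists u in t, [&& u \in W, owner u != a & E u v]]].

Definition tattr_closed (W : {set V}) (T : seq {set V}) (a : bool)
    (A Z : {set V}) : bool :=
  [&& A \subset Z,
      [forall v in W, ((owner v == a) && [exists w in Z, (w \in W) && E v w])
                        ==> (v \in Z)],
      [forall v in W, ((owner v != a) && [forall w in W, E v w ==> (w \in Z)])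
                        ==> (v \in Z)] &
      all (fun t : {set V} => [&& t \subset W, odd (maxpr t) == a,
                        tangle_escape W t != set0 & tangle_escape W t \subset Z]
                    ==> (t \subset Z)) T].

Definition tattr (W : {set V}) (T : seq {set V}) (a : bool) (A : {set V})
    : {set V} :=
  \bigcap_(Z : {set V} | (Z \subset W) && tattr_closed W T a A Z) Z.

Definition region_strategy (W A Z : {set V}) (a : bool) (s : V -> option V)
    : Prop :=
  (forall v w, s v = Some w -> [/\ v \in Z, owner v = a, w \in Z & E v w]) /\
  (forall v, v \in Z -> owner v = a ->
     (exists w, s v = Some w) <-> (v \notin A \/ exists2 w, w \in Z & E v w)).

Record region := Region {
  rset : {set V};
  rplayer : bool;
  rstrat : V -> option V
}.

Fixpoint is_decomp_from (T : seq {set V}) (W : {set V}) (rs : seq region)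
    : Prop :=
  match rs with
  | [::] => W = set0
  | r :: rs' =>
    let p := maxpr W in
    let A := [set v in W | pr v == p] in
    let T' := [seq t <- T | (t : {set V}) \subset W] in
    [/\ W != set0, rplayer r = odd p, rset r = tattr W T' (odd p) A,
        region_strategy W A (rset r) (odd p) (rstrat r) &
        is_decomp_from T (W :\: rset r) rs']
  end.

Definition is_decomp (T : seq {set V}) (rs : seq region) : Prop :=
  is_decomp_from T setT rs.

Definition ext_ok (W Z : {set V}) (a : bool) (s : V -> option V)
    (X : {set V}) : bool :=
  (X \subset Z) &&
  [forall v in X, if owner v == a then (if s v is Some w then w \in X else false)
                  else [forall w in W, E v w ==> (w \in X)]].

Definition ext_Y (W Z : {set V}) (a : bool) (s : V -> option V) : {set V} :=
  \bigcup_(X : {set V} | ext_ok W Z a s X) X.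

Definition ext_edge (W Y : {set V}) (a : bool) (s : V -> option V) : rel V :=
  fun u w => [&& u \in Y, w \in Y &
                 if owner u == a then s u == Some w else (w \in W) && E u w].

Definition is_bottom_scc (e : rel V) (Y C : {set V}) : bool :=
  [&& C != set0, C \subset Y,
      [forall u in C, forall w in C, connect e u w],
      [forall u in C, forall w, connect e u w ==> (w \in C)] &
      [exists u in C, exists w in C, e u w]].

Definition extract_tangles (W Z : {set V}) (a : bool) (s : V -> option V)
    : {set {set V}} :=
  let Y := ext_Y W Z a s in
  [set C | is_bottom_scc (ext_edge W Y a s) Y C].

Fixpoint extract_all (W : {set V}) (rs : seq region) : seq {set {set V}} :=
  match rs with
  | [::] => [::]
  | r :: rs' => extract_tangles W (rset r) (rplayer r) (rstrat r)
                :: extract_all (W :\: rset r) rs'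
  end.

(* Cost model: the game is given by adjacency lists succs/preds; vertex sets
   are bit arrays (membership / insertion O(1)) also available as lists.
   Every elementary step is charged 1; traversing an adjacency list of
   length k is charged k (+1).  The second component of every result is
   the accumulated cost. *)

Definition succs (v : V) : seq V := [seq w <- enum V | E v w].
Definition preds (v : V) : seq V := [seq u <- enum V | E u v].
Definition nedges : nat := \sum_(v : V) size (succs v).

Definition init_bad (W Z : {set V}) (a : bool) (s : V -> option V)
    : seq V * nat :=
  foldr (fun (v : V) (acc : seq V * nat) =>
    let: (B, c) := acc in
    if owner v == a then
      (if (if s v is Some w then w \in Z else false) then (B, c.+1)
       else (v :: B, c.+1))
    else
      (if all (fun w => (w \notin W) || (w \in Z)) (succs v)
       then (B, c + (size (succs v)).+1)
       else (v :: B, c + (size (succs v)).+1)))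
  ([::], 0) (enum Z).

Fixpoint propagate (fuel : nat) (Z : {set V}) (a : bool) (s : V -> option V)
    (B : {set V}) (work : seq V) (c : nat) : {set V} * nat :=
  match fuel with
  | 0 => (B, c)
  | fuel'.+1 =>
    match work with
    | [::] => (B, c)
    | x :: work' =>
      let nw := [seq u <- preds x |
                  [&& u \in Z, u \notin B & (owner u == a) ==> (s u == Some x)]] in
      propagate fuel' Z a s (B :|: [set u in nw]) (nw ++ work')
                (c + (size (preds x)).+1)
    end
  end.

(* iterative depth-first search; post receives vertices at finishing time *)
Fixpoint dfs_loop (next : V -> seq V) (ncost : V -> nat) (fuel : nat)
    (vis : {set V}) (stk : seq (V * seq V)) (post : seq V) (c : nat)
    : {set V} * seq V * nat :=
  match fuel with
  | 0 => (vis, post, c)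
  | fuel'.+1 =>
    match stk with
    | [::] => (vis, post, c)
    | (v, [::]) :: stk' => dfs_loop next ncost fuel' vis stk' (v :: post) c.+1
    | (v, w :: ws) :: stk' =>
      if w \in vis then dfs_loop next ncost fuel' vis ((v, ws) :: stk') post c.+1
      else dfs_loop next ncost fuel' (w |: vis) ((w, next w) :: (v, ws) :: stk')
                    post (c + (ncost w).+1)
    end
  end.

Definition dfs_fuel : nat := (#|V| + nedges).*2.+2.

Definition dfs_from (next : V -> seq V) (ncost : V -> nat) (vis : {set V})
    (v : V) (post : seq V) (c : nat) : {set V} * seq V * nat :=
  dfs_loop next ncost dfs_fuel (v |: vis) [:: (v, next v)] post (c + (ncost v).+1).

(* Kosaraju, first pass: vertices by decreasing finishing time *)
Definition pass1 (next : V -> seq V) (ncost : V -> nat) (order : seq V)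
    : seq V * nat :=
  let: (_, post, c) :=
    foldl (fun (acc : {set V} * seq V * nat) (v : V) => let: (vis, post, c) := acc in
             if v \in vis then (vis, post, c.+1)
             else dfs_from next ncost vis v post c.+1)
          (set0, [::], 0) order in
  (post, c).

(* Kosaraju, second pass on the reversed graph: strongly connected components *)
Definition pass2 (rnext : V -> seq V) (rncost : V -> nat) (order : seq V)
    : seq (seq V) * nat :=
  let: (_, comps, c) :=
    foldl (fun (acc : {set V} * seq (seq V) * nat) (v : V) => let: (vis, comps, c) := acc in
             if v \in vis then (vis, comps, c.+1)
             else let: (vis', comp, c') := dfs_from rnext rncost vis v [::] c.+1 in
                  (vis', comp :: comps, c'))
          (set0, [::], 0) order in
  (comps, c).

Definition hnext (W Y : {set V}) (a : bool) (s : V -> option V) (u : V) : seq V :=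
  [seq w <- succs u | ext_edge W Y a s u w].
Definition hrnext (W Y : {set V}) (a : bool) (s : V -> option V) (x : V) : seq V :=
  [seq u <- preds x | ext_edge W Y a s u x].
Definition scost (u : V) : nat := size (succs u).
Definition pcost (u : V) : nat := size (preds u).

Definition search_region (W Z : {set V}) (a : bool) (s : V -> option V)
    : seq {set V} * nat :=
  let: (B0, c0) := init_bad W Z a s in
  let: (B, c1) := propagate #|V|.+1 Z a s [set x in B0] B0 c0 in
  let Y := Z :\: B in
  let c2 := c1 + #|Z| in
  let: (order, c3) := pass1 (hnext W Y a s) scost (enum Y) in
  let: (comps, c4) := pass2 (hrnext W Y a s) pcost order in
  let check (comp : seq V) :=
    let C := [set x in comp] in
    all (fun x => all (fun w => w \in C) (hnext W Y a s x)) comp &&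
    has (fun x => hnext W Y a s x != [::]) comp in
  let ccost := \sum_(comp <- comps) \sum_(x <- comp) (scost x).+1 in
  ([seq [set x in comp] | comp <- comps & check comp],
   c2 + c3 + c4 + ccost + #|Y|).

Fixpoint search (W : {set V}) (rs : seq region) : seq (seq {set V}) * nat :=
  match rs with
  | [::] => ([::], 1)
  | r :: rs' =>
    let: (out, c) := search_region W (rset r) (rplayer r) (rstrat r) in
    let: (outs, c') := search (W :\: rset r) rs' in
    (out :: outs, c + c' + #|rset r|.+1)
  end.

End ParityGames.

(* Main.v *)
Require Import Defs.
From mathcomp Require Import all_boot zify.
Set Implicit Arguments. Unset Strict Implicit. Unset Printing Implicit Defensive.

Section DFS.
Variable V : finType.
Variable next : V -> seq V.
Variable ncost : V -> nat.

Definition nr : rel V := fun x y => y \in next x.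
Local Notation cn := (connect nr).
Definition gray (stk : seq (V * seq V)) : seq V := map fst stk.
Definition fw (w : V) := (size (next w) + ncost w).+1.
Definition Psi (vis : {set V}) := \sum_(w | w \notin vis) fw w.
Definition Phi vis (stk : seq (V * seq V)) :=
  size stk + sumn (map (fun f => size f.2) stk) + Psi vis.
Definition Rs : rel V := fun x y => cn y x.

Lemma Rs_trans : transitive Rs.
Proof. move=> y x z /= Hyx Hzy; exact: connect_trans Hzy Hyx. Qed.

Record Inv (K : {set V}) (P0 : seq V) (root : V) (vis : {set V})
   (stk : seq (V * seq V)) (post : seq V) : Prop := {
  i1 : forall x, (x \in vis) = [|| x \in K, x \in post | x \in gray stk];
  i2 : uniq (post ++ gray stk);
  i2' : forall x, x \in K -> x \notin post ++ gray stk;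
  i3 : forall b w, (b \in K) || (b \in post) -> w \in next b -> w \in vis;
  i4 : forall v ws, (v, ws) \in stk -> forall w, w \in next v -> (w \in vis) || (w \in ws);
  i4' : forall v ws, (v, ws) \in stk -> {subset ws <= next v};
  i5 : sorted Rs (gray stk);
  i6 : forall x y, (x \in K) || (x \in post) -> y \notin K -> y \notin post -> cn x y ->
        exists2 g, g \in gray stk & cn g x && cn x g;
  i7 : forall x v, x \in post -> v \in post -> cn x v -> ~~ cn v x ->
        exists2 z, cn x z && cn z x & (z \in gray stk) || (index z post < index v post);
  i8 : forall x, x \in post -> (x \in P0) || cn root x;
  i9 : forall g, g \in gray stk -> cn root g
}.

Record SE (K : {set V}) (vis : {set V}) (post : seq V) : Prop := {
  s1 : forall x, (x \in vis) = (x \in K) || (x \in post);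
  s2 : uniq post;
  s2' : forall x, x \in K -> x \notin post;
  s3 : forall x y, (x \in K) || (x \in post) -> cn x y -> (y \in K) || (y \in post);
  s4 : forall x v, x \in post -> v \in post -> cn x v -> ~~ cn v x ->
        exists2 z, cn x z && cn z x & index z post < index v post
}.

Lemma exit_path (P : pred V) x y : P x -> ~~ P y -> cn x y ->
  exists b, exists q, [/\ P b, ~~ P q, cn x b & nr b q].
Proof.
move=> Px nPy /connectP [p]; elim: p x Px => [|z p IH] x Px /=.
  by move=> _ Hy; rewrite Hy Px in nPy.
move=> /andP [xz pz] ly; case Pz: (P z).
  have [b [q [Pb nPq zb bq]]] := IH z Pz pz ly.
  by exists b, q; split=> //; apply: connect_trans (connect1 xz) zb.
by exists x, z; split=> //; rewrite Pz.
Qed.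

Lemma inv_done K P0 root vis post : Inv K P0 root vis [::] post -> SE K vis post.
Proof.
move=> HI; split.
- by move=> x; rewrite (i1 HI) /= in_nil orbF.
- by have := i2 HI; rewrite /= cats0.
- by move=> x Hx; have := i2' HI Hx; rewrite /= cats0.
- move=> x y Hx Hxy; case Hy: ((y \in K) || (y \in post)) => //.
  move/negbT: Hy; rewrite negb_or => /andP [HyK Hyp].
  by have [g] := i6 HI Hx HyK Hyp Hxy.
- move=> x v Hx Hv Hxv Hvx; have [z Hz] := i7 HI Hx Hv Hxv Hvx.
  by exists z; move: Hz; rewrite /gray /=.
Qed.


Lemma inv_pop K P0 root vis u stk' post :
  Inv K P0 root vis ((u, [::]) :: stk') post -> Inv K P0 root vis stk' (u :: post).
Proof.
move=> HI.
have Hg : gray ((u, [::]) :: stk') = u :: gray stk' by [].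
have U := i2 HI; rewrite Hg in U.
have unp : u \notin post by move: U; rewrite cat_uniq /= negb_or => /and3P [_ /andP [H _] _].
have uK : u \notin K.
  apply/negP => uK; have := i2' HI uK; by rewrite Hg mem_cat in_cons eqxx orbT.
have Hsort := i5 HI; rewrite Hg /= in Hsort.
have Hall : forall q, q \in gray stk' -> cn q u.
  by move=> q Hq; have := order_path_min Rs_trans Hsort => /allP /(_ q Hq).
split.
- by move=> x; rewrite (i1 HI) Hg !in_cons; case: (x \in K); case: (x == u); case: (x \in post).
- by move: (uniq_catCA post [:: u] (gray stk')); rewrite /= U => <-.
- move=> x Hx; have := i2' HI Hx; rewrite Hg !mem_cat !in_cons.
  by case: (x == u); case: (x \in post).
- move=> b w; rewrite in_cons; case: (b =P u) => [-> _|_ /= Hb] Hw.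
    by have := i4 HI (mem_head _ _) Hw; rewrite orbF.
  exact: (i3 HI Hb Hw).
- by move=> v ws Hv; apply: (i4 HI); rewrite in_cons Hv orbT.
- by move=> v ws Hv; apply: (i4' HI); rewrite in_cons Hv orbT.
- exact: path_sorted Hsort.
- move=> x y Hx HyK Hyp Hxy.
  have nP : ~~ ((y \in K) || (y \in u :: post)) by rewrite negb_or HyK.
  have [b [q [Pb nPq xb bq]]] :=
     exit_path (P := [pred z | (z \in K) || (z \in u :: post)]) Hx nP Hxy.
  have qvis : q \in vis.
    move: Pb; rewrite !inE; case: (b =P u) => [Ebu _|_ /= Hb].
      by rewrite Ebu in bq; have := i4 HI (mem_head _ _) bq; rewrite orbF.
    exact: (i3 HI Hb bq).
  have qg : q \in gray stk'.
    move: nPq qvis; rewrite (i1 HI) Hg !inE.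
    by case: (q \in K); case: (q == u); case: (q \in post).
  have xq : cn x q := connect_trans xb (connect1 bq).
  move: Hx; rewrite in_cons; case: (x =P u) => [Exu _|_ /= Hx].
    by rewrite Exu in xq *; exists q => //; rewrite xq Hall.
  move: nPq; rewrite !inE negb_or negb_or => /andP [qK /andP [_ qp]].
  have [g] := i6 HI Hx qK qp xq; rewrite Hg in_cons; case: (g =P u) => [->|_ /=] Hg' Hgx.
    by exists q => //; rewrite xq andbT; apply: connect_trans (Hall q qg) _; case/andP: Hgx.
  by exists g.
- move=> x v; rewrite !in_cons => Hx Hv Hxv Hvx.
  case: (x =P u) Hx => [Exu _|Nxu /= Hx].
    subst x; have Nvu : v != u by apply/eqP => E; rewrite E connect0 in Hvx.
    exists u; first by rewrite connect0.
    have Euv : (u == v) = false by rewrite eq_sym (negbTE Nvu).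
    by apply/orP; right; rewrite /= eqxx Euv.
  case: (v =P u) Hv => [Evu _|Nvu /= Hv].
    subst v; have Hx' : (x \in K) || (x \in post) by rewrite Hx orbT.
    have [g] := i6 HI (x := x) (y := u) Hx' uK unp Hxv.
    rewrite Hg in_cons; case: (g =P u) => [->|_ /=] Hg' Hgx.
      by case/andP: Hgx => H _; rewrite H in Hvx.
    by exists g; [rewrite andbC | rewrite Hg'].
  have [z Hz Hz'] := i7 HI Hx Hv Hxv Hvx; exists z => //.
  move: Hz'; rewrite Hg in_cons /=.
  have Hvu : (u == v) = false by apply/eqP => E; apply: Nvu; rewrite E.
  rewrite Hvu; case: (z =P u) => [->|Nzu] /=; first by rewrite eqxx orbT.
  have -> : (u == z) = false by apply/eqP => E; apply: Nzu; rewrite E.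
  by case: (z \in gray stk').
- move=> x; rewrite in_cons; case: (x =P u) => [->|_ /=] Hx.
    by rewrite (i9 HI) ?orbT // Hg mem_head.
  exact: (i8 HI Hx).
- by move=> g Hg'; apply: (i9 HI); rewrite Hg in_cons Hg' orbT.
Qed.


Lemma inv_skip K P0 root (vis : {set V}) (v w : V) ws stk' post : w \in vis ->
  Inv K P0 root vis ((v, w :: ws) :: stk') post -> Inv K P0 root vis ((v, ws) :: stk') post.
Proof.
move=> wv HI; split; try exact: (i1 HI); try exact: (i2 HI); try exact: (i2' HI);
  try exact: (i3 HI); try exact: (i5 HI); try exact: (i6 HI); try exact: (i7 HI);
  try exact: (i8 HI); try exact: (i9 HI).
- move=> a b; rewrite in_cons => /orP [/eqP [-> ->]|H] x Hx.
    have := i4 HI (mem_head _ _) Hx; rewrite in_cons.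
    by case: (x =P w) => [->|_]; rewrite ?wv.
  by apply: (i4 HI) Hx; rewrite in_cons H orbT.
- move=> a b; rewrite in_cons => /orP [/eqP [-> ->]|H] x Hx.
    by apply: (i4' HI (mem_head _ _)); rewrite in_cons Hx orbT.
  by apply: (i4' HI) Hx; rewrite in_cons H orbT.
Qed.

Lemma inv_push K P0 root (vis : {set V}) (v w : V) ws stk' post : w \notin vis ->
  Inv K P0 root vis ((v, w :: ws) :: stk') post ->
  Inv K P0 root (w |: vis) ((w, next w) :: (v, ws) :: stk') post.
Proof.
move=> wv HI.
have Hg : gray ((v, w :: ws) :: stk') = v :: gray stk' by [].
have Hg2 : gray ((w, next w) :: (v, ws) :: stk') = w :: v :: gray stk' by [].
have wK : w \notin K by apply: contra wv => H; rewrite (i1 HI) H.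
have wp : w \notin post by apply: contra wv => H; rewrite (i1 HI) H orbT.
have wg : w \notin v :: gray stk' by apply: contra wv => H; rewrite (i1 HI) Hg H !orbT.
have vw : w \in next v by apply: (i4' HI (mem_head _ _)); rewrite mem_head.
split.
- by move=> x; rewrite in_setU1 (i1 HI) Hg Hg2 !in_cons;
     case: (x == w); case: (x \in K); case: (x == v); case: (x \in post).
- rewrite Hg2; move: (uniq_catCA post [:: w] (v :: gray stk')) => /= ->.
  rewrite mem_cat negb_or wp /=; move: (i2 HI); rewrite Hg => -> .
  by rewrite andbT.
- move=> x Hx; have := i2' HI Hx; rewrite Hg Hg2 !mem_cat !in_cons.
  have -> : (x == w) = false by apply/eqP => E; rewrite -E Hx in wK.
  by [].
- by move=> b x Hb Hx; rewrite in_setU1 (i3 HI Hb Hx) orbT.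
- move=> a b; rewrite !in_cons => /or3P [/eqP [-> ->]|/eqP [-> ->]|H] x Hx.
  + by rewrite Hx orbT.
  + have := i4 HI (mem_head _ _) Hx; rewrite in_cons in_setU1.
    by case: (x == w); case: (x \in vis).
  + have Hab : (a, b) \in (v, w :: ws) :: stk' by rewrite in_cons H orbT.
    by have := i4 HI Hab Hx; rewrite in_setU1; case/orP => ->; rewrite ?orbT.
- move=> a b; rewrite !in_cons => /or3P [/eqP [-> ->]|/eqP [-> ->]|H] x Hx //.
    by apply: (i4' HI (mem_head _ _)); rewrite in_cons Hx orbT.
  by apply: (i4' HI) Hx; rewrite in_cons H orbT.
- by rewrite Hg2 /=; have := i5 HI; rewrite Hg /= => ->; rewrite andbT /Rs connect1.
- move=> x y Hx HyK Hyp Hxy; have [g Hg' Hgx] := i6 HI Hx HyK Hyp Hxy.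
  by exists g => //; rewrite Hg2 in_cons; rewrite Hg in Hg'; rewrite Hg' orbT.
- move=> x y Hx Hy Hxy Hyx; have [z Hz Hz'] := i7 HI Hx Hy Hxy Hyx.
  exists z => //; move: Hz'; rewrite Hg Hg2 !in_cons.
  by case: (z == w); case: (z == v).
- exact: (i8 HI).
- move=> g; rewrite Hg2 in_cons => /orP [/eqP ->|H].
    apply: connect_trans (i9 HI (g := v) _) (connect1 _) => //.
    by rewrite Hg mem_head.
  by apply: (i9 HI); rewrite Hg.
Qed.


Lemma PsiU1 (vis : {set V}) w : w \notin vis -> Psi vis = fw w + Psi (w |: vis).
Proof.
move=> wv; rewrite /Psi (bigD1 w) //=; congr (_ + _).
by apply: eq_bigl => x; rewrite in_setU1 negb_or andbC.
Qed.

Lemma dfs_loop_ok K P0 root fuel : forall vis stk post c,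
  Phi vis stk < fuel -> Inv K P0 root vis stk post ->
  let: (vis', post', c') := dfs_loop next ncost fuel vis stk post c in
  [/\ SE K vis' post', (forall x, x \in post' -> (x \in P0) || cn root x),
      vis \subset vis' & c' + Psi vis' <= c + Phi vis stk].
Proof.
elim: fuel => [//|fuel IH] vis stk post c Hlt HI /=.
case: stk Hlt HI => [|[v [|w ws]] stk'] Hlt HI.
- split; first exact: inv_done HI.
  + exact: (i8 HI).
  + by [].
  + by rewrite /Phi /= add0n leq_add2l.
- have HI' := inv_pop HI.
  have Hlt' : Phi vis stk' < fuel by move: Hlt; rewrite /Phi /=; lia.
  have := IH vis stk' (v :: post) c.+1 Hlt' HI'.
  case: dfs_loop => [[vis' post'] c'] [HS H8 Hsub Hc]; split => //.
  by move: Hc; rewrite /Phi /=; lia.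
- case wv: (w \in vis).
  + have HI' := inv_skip wv HI.
    have Hlt' : Phi vis ((v, ws) :: stk') < fuel by move: Hlt; rewrite /Phi /=; lia.
    have := IH _ _ post c.+1 Hlt' HI'.
    case: dfs_loop => [[vis' post'] c'] [HS H8 Hsub Hc]; split => //.
    by move: Hc; rewrite /Phi /=; lia.
  + have HI' := inv_push (negbT wv) HI.
    have EP := PsiU1 (negbT wv).
    have Hlt' : Phi (w |: vis) ((w, next w) :: (v, ws) :: stk') < fuel.
      by move: Hlt; rewrite /Phi /= EP /fw; lia.
    have := IH _ _ post (c + (ncost w).+1) Hlt' HI'.
    case: dfs_loop => [[vis' post'] c'] [HS H8 Hsub Hc]; split => //.
    * exact: subset_trans (subsetUr _ _) Hsub.
    * by move: Hc; rewrite /Phi /= EP /fw; lia.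
Qed.


Lemma sum_fw : \sum_w fw w = \sum_w size (next w) + \sum_w ncost w + #|V|.
Proof.
rewrite /fw; under eq_bigr do rewrite -addn1.
by rewrite !big_split /= sum1_card.
Qed.

Lemma Psi_le (vis : {set V}) : Psi vis <= \sum_w fw w.
Proof. by rewrite [X in _ <= X](bigID (fun w => w \notin vis)) /= leq_addr. Qed.

Lemma dfs_from_ok (E : rel V) K vis v post c :
  \sum_u size (next u) <= nedges E -> \sum_u ncost u <= nedges E ->
  SE K vis post -> v \notin vis ->
  let: (vis', post', c') := dfs_from E next ncost vis v post c in
  [/\ SE K vis' post', (forall x, x \in post' -> (x \in post) || cn v x),
      vis \subset vis', v \in vis' & c' + Psi vis' <= c.+1 + Psi vis].
Proof.
move=> Hn1 Hn2 HS vv; rewrite /dfs_from.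
have HI : Inv K post v (v |: vis) [:: (v, next v)] post.
  split.
  - by move=> x; rewrite in_setU1 (s1 HS) /= in_cons in_nil orbF;
       case: (x == v); case: (x \in K); case: (x \in post).
  - rewrite /= cat_uniq (s2 HS) /= andbT orbF.
    by apply: contra vv => H; rewrite (s1 HS) H orbT.
  - move=> x Hx; rewrite mem_cat negb_or (s2' HS Hx) /= in_cons in_nil orbF.
    by apply/eqP => E'; rewrite -E' (s1 HS) Hx in vv.
  - by move=> b w Hb Hw; rewrite in_setU1 (s1 HS) (s3 HS Hb (connect1 Hw)) orbT.
  - by move=> a b; rewrite in_cons in_nil orbF => /eqP [-> ->] w ->; rewrite orbT.
  - by move=> a b; rewrite in_cons in_nil orbF => /eqP [-> ->].
  - by [].
  - move=> x y Hx HyK Hyp Hxy; have := s3 HS Hx Hxy.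
    by rewrite (negbTE HyK) (negbTE Hyp).
  - move=> x y Hx Hy Hxy Hyx; have [z Hz Hz'] := s4 HS Hx Hy Hxy Hyx.
    by exists z => //; rewrite Hz' orbT.
  - by move=> x ->.
  - by move=> g; rewrite /= in_cons in_nil orbF => /eqP ->.
have EP := PsiU1 vv.
have Hlt : Phi (v |: vis) [:: (v, next v)] < dfs_fuel E.
  have := Psi_le vis; rewrite sum_fw EP /Phi /dfs_fuel /fw /=.
  move: Hn1 Hn2; rewrite -!addnn; lia.
have := dfs_loop_ok (c + (ncost v).+1) Hlt HI.
case: dfs_loop => [[vis' post'] c'] [HS' H8 Hsub Hc]; split => //.
- exact: subset_trans (subsetUr _ _) Hsub.
- by apply: (subsetP Hsub); rewrite setU11.
- by move: Hc; rewrite /Phi /= EP /fw; lia.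
Qed.


Definition step1 (E : rel V) := fun (acc : {set V} * seq V * nat) (v : V) =>
  let: (vis, post, c) := acc in
  if v \in vis then (vis, post, c.+1) else dfs_from E next ncost vis v post c.+1.

Lemma pass1E E order : pass1 E next ncost order =
  let: (_, post, c) := foldl (step1 E) (set0, [::], 0) order in (post, c).
Proof. by []. Qed.

Lemma foldl1_ok (E : rel V) :
  \sum_u size (next u) <= nedges E -> \sum_u ncost u <= nedges E ->
  forall l vis post c, SE set0 vis post ->
  let: (vis', post', c') := foldl (step1 E) (vis, post, c) l in
  [/\ SE set0 vis' post', {subset l <= vis'}, vis \subset vis' &
      c' + Psi vis' <= c + (size l).*2 + Psi vis].
Proof.
move=> Hn1 Hn2; elim=> [|v l IH] vis post c HS /=.
  by split=> //; rewrite addn0.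
case vv: (v \in vis).
  have := IH vis post c.+1 HS; case: foldl => [[vis' post'] c'] [HS' Hl Hsub Hc].
  split=> //.
  - move=> x; rewrite in_cons => /orP [/eqP ->|]; last exact: Hl.
    exact: (subsetP Hsub).
  - by move: Hc; rewrite doubleS; lia.
have := dfs_from_ok c.+1 Hn1 Hn2 HS (negbT vv).
case: dfs_from => [[vis1 post1] c1] [HS1 _ Hsub1 Hv1 Hc1].
have := IH vis1 post1 c1 HS1; case: foldl => [[vis' post'] c'] [HS' Hl Hsub Hc].
split=> //.
- move=> x; rewrite in_cons => /orP [/eqP ->|]; last exact: Hl.
  exact: (subsetP Hsub).
- exact: subset_trans Hsub1 Hsub.
- by move: Hc Hc1; rewrite doubleS; lia.
Qed.

Lemma pass1_ok (E : rel V) order :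
  \sum_u size (next u) <= nedges E -> \sum_u ncost u <= nedges E ->
  let: (post, c) := pass1 E next ncost order in
  [/\ uniq post, {subset order <= post},
      (forall x v, x \in post -> v \in post -> cn x v -> ~~ cn v x ->
        exists2 z, cn x z && cn z x & index z post < index v post) &
      c <= (size order).*2 + \sum_w fw w].
Proof.
move=> Hn1 Hn2; rewrite pass1E.
have HS0 : SE set0 set0 [::].
  by split; [move=> x; rewrite !inE | | move=> x; rewrite inE | move=> x y; rewrite !inE | ].
have := foldl1_ok Hn1 Hn2 order 0 HS0.
case: foldl => [[vis' post'] c'] [HS Hl _ Hc]; split.
- exact: (s2 HS).
- by move=> x /Hl; rewrite (s1 HS) inE.
- exact: (s4 HS).
- by move: Hc (Psi_le vis') (Psi_le set0); lia.
Qed.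

End DFS.

Section P2.
Variable V : finType.
Variables (next1 rnext : V -> seq V) (rncost : V -> nat) (E : rel V).
Local Notation cn1 := (connect (nr next1)).
Local Notation cnr := (connect (nr rnext)).
Hypothesis Hrev : forall x y, (y \in rnext x) = (x \in next1 y).

Lemma cnr_rev x y : cnr x y = cn1 y x.
Proof.
have -> : cnr x y = connect [rel a b | nr next1 b a] x y.
  by apply: eq_connect => a b; rewrite /nr /= Hrev.
exact: connect_rev.
Qed.

Definition step2 := fun (acc : {set V} * seq (seq V) * nat) (v : V) =>
  let: (vis, comps, c) := acc in
  if v \in vis then (vis, comps, c.+1)
  else let: (vis', comp, c') := dfs_from E rnext rncost vis v [::] c.+1 in
       (vis', comp :: comps, c').

Lemma pass2E order : pass2 E rnext rncost order =
  let: (_, comps, c) := foldl step2 (set0, [::], 0) order in (comps, c).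
Proof. by []. Qed.

Variable order : seq V.
Hypothesis Hord : forall x v, x \in order -> v \in order -> cn1 x v -> ~~ cn1 v x ->
  exists2 z, cn1 x z && cn1 z x & index z order < index v order.
Hypothesis Hedge : forall x y, y \in next1 x -> x \in order.
Hypothesis Hn1 : \sum_u size (rnext u) <= nedges E.
Hypothesis Hn2 : \sum_u rncost u <= nedges E.

Record J (pre : seq V) (vis : {set V}) (comps : seq (seq V)) : Prop := {
  j1 : forall x y, x \in vis -> cnr x y -> y \in vis;
  j2 : forall x, x \in pre -> x \in vis;
  j3 : forall x y, x \in vis -> cn1 x y -> cn1 y x -> y \in vis;
  j4 : forall comp, comp \in comps -> exists v, forall x, (x \in comp) = cn1 v x && cn1 x v;
  j5 : uniq (flatten comps);
  j6 : forall x, (x \in vis) = (x \in flatten comps)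
}.

Lemma in_order x v : cn1 x v -> x != v -> x \in order.
Proof.
case/connectP => [[|y p]] /=; first by move=> _ ->; rewrite eqxx.
by case/andP => xy _ _ _; apply: Hedge xy.
Qed.

Lemma foldl2_ok : forall l pre vis comps c, order = pre ++ l -> J pre vis comps ->
  let: (vis', comps', c') := foldl step2 (vis, comps, c) l in
  J (pre ++ l) vis' comps' /\ c' + Psi rnext rncost vis' <= c + (size l).*2 + Psi rnext rncost vis.
Proof.
elim=> [|v l IH] pre vis comps c Hord' HJ /=.
  by rewrite cats0 addn0.
rewrite -cat_rcons in Hord' *.
case vv: (v \in vis).
  have HJ' : J (rcons pre v) vis comps.
    case: HJ => H1 H2 H3 H4 H5 H6; split=> //.
    by move=> x; rewrite mem_rcons in_cons => /orP [/eqP ->|/H2].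
  have := IH (rcons pre v) vis comps c.+1 Hord' HJ'.
  case: foldl => [[vis' comps'] c'] [HJ'' Hc]; split=> //.
  by move: Hc; rewrite doubleS; lia.
have HS : SE rnext vis vis [::].
  split=> //.
  - by move=> x; rewrite orbF.
  - by move=> x y; rewrite orbF => Hx Hxy; rewrite (j1 HJ Hx Hxy).
have := dfs_from_ok c.+1 Hn1 Hn2 HS (negbT vv).
case: dfs_from => [[vis1 comp] c1] [HS1 H8 Hsub1 Hv1 Hc1].
have vpre : v \notin pre by apply: contra (negbT vv); apply: (j2 HJ).
have Hcomp : forall x, (x \in comp) = cn1 v x && cn1 x v.
  move=> x; apply/idP/idP.
  - move=> xc; have xv : cn1 x v by rewrite -cnr_rev; have := H8 x xc.
    rewrite xv andbT; apply/negPn/negP => vx.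
    have xo : x \in order.
      case: (x =P v) => [E'|/eqP Nxv]; last exact: in_order xv Nxv.
      by rewrite E' connect0 in vx.
    have vo : v \in order by rewrite Hord' mem_cat mem_rcons mem_head.
    have [z /andP [xz zx] Hz] := Hord xo vo xv vx.
    have Iv : index v order = size pre.
      by rewrite Hord' -cats1 -catA index_cat (negbTE vpre) /= eqxx addn0.
    have zp : z \in pre.
      move: Hz; rewrite Iv Hord' -cats1 -catA index_cat; case: (z \in pre) => // H.
      by rewrite ltnNge leq_addr in H.
    have xvis : x \in vis := j3 HJ (j2 HJ zp) zx xz.
    by have := s2' HS1 xvis; rewrite xc.
  - case/andP => vx xv.
    have vc : v \in comp by move: Hv1; rewrite (s1 HS1) vv.
    have := s3 HS1 (x := v) (y := x); rewrite vc orbT cnr_rev xv => /(_ isT isT).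
    case/orP => // xvis.
    by have := j3 HJ xvis xv vx; rewrite vv.
have HJ' : J (rcons pre v) vis1 (comp :: comps).
  split.
  - by move=> x y Hx Hxy; rewrite (s1 HS1) (s3 HS1 _ Hxy) // -(s1 HS1).
  - move=> x; rewrite mem_rcons in_cons => /orP [/eqP ->|/(j2 HJ) H] //.
    exact: (subsetP Hsub1).
  - move=> x y; rewrite (s1 HS1) => /orP [Hx|Hx] xy yx.
      by rewrite (s1 HS1) (j3 HJ Hx xy yx).
    rewrite (s1 HS1) Hcomp; move: Hx; rewrite Hcomp => /andP [vx xv].
    by rewrite (connect_trans vx xy) (connect_trans yx xv) orbT.
  - move=> comp'; rewrite in_cons => /orP [/eqP ->|]; first by exists v.
    exact: (j4 HJ).
  - rewrite /= cat_uniq (s2 HS1) (j5 HJ) andbT /=.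
    apply/hasPn => x; rewrite -(j6 HJ) => xv.
    exact: (s2' HS1 xv).
  - by move=> x; rewrite (s1 HS1) /= mem_cat (j6 HJ) orbC.
have := IH (rcons pre v) vis1 (comp :: comps) c1 Hord' HJ'.
case: foldl => [[vis' comps'] c'] [HJ'' Hc]; split=> //.
by move: Hc Hc1; rewrite doubleS; lia.
Qed.

Lemma pass2_ok :
  let: (comps, c) := pass2 E rnext rncost order in
  [/\ (forall comp, comp \in comps -> exists v, forall x, (x \in comp) = cn1 v x && cn1 x v),
      (forall x, x \in order -> exists2 comp, comp \in comps & x \in comp),
      uniq (flatten comps) &
      c <= (size order).*2 + \sum_w fw rnext rncost w].
Proof.
rewrite pass2E.
have HJ0 : J [::] set0 [::].
  by split=> //= [x y|x y|x]; rewrite inE.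
have := @foldl2_ok order [::] set0 [::] 0 (erefl _) HJ0.
case: foldl => [[vis' comps'] c'] [HJ Hc]; split.
- exact: (j4 HJ).
- by move=> x /(j2 HJ); rewrite (j6 HJ) => /flattenP.
- exact: (j5 HJ).
- by move: Hc (Psi_le rnext rncost vis') (Psi_le rnext rncost set0); lia.
Qed.

End P2.

Section Count.
Variable V : finType.
Variable E : rel V.

Lemma size_filter_sum (P : pred V) : size [seq w <- enum V | P w] = \sum_w (P w : nat).
Proof. by rewrite size_filter -sum1_count big_mkcond /= enumT. Qed.

Lemma sum_preds : \sum_x size (preds E x) = nedges E.
Proof.
rewrite /nedges /preds /succs.
under eq_bigr do rewrite size_filter_sum.
under [X in _ = X]eq_bigr do rewrite size_filter_sum.
by rewrite exchange_big.
Qed.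

Lemma nedges_card : nedges E = #|[pred p : V * V | E p.1 p.2]|.
Proof.
rewrite /nedges /succs; under eq_bigr do rewrite size_filter_sum.
rewrite pair_bigA /= -sum1_card [X in _ = X]big_mkcond /=.
by apply: eq_bigr => p _; rewrite inE; case: (E p.1 p.2).
Qed.

Lemma card_le_nedges : (forall v, exists w, E v w) -> #|V| <= nedges E.
Proof.
move=> Hs; rewrite -sum1_card /nedges; apply: leq_sum => v _.
have [w Hw] := Hs v; rewrite lt0n; apply/negP => /eqP /size0nil H.
have : w \in succs E v by rewrite mem_filter Hw mem_enum.
by rewrite H.
Qed.

End Count.

Section Region.
Variable V : finType.
Variable owner : V -> bool.
Variable E : rel V.
Variables (W Z : {set V}) (a : bool) (s : V -> option V).

Definition bad v := if owner v == a then ~~ (if s v is Some w then w \in Z else false)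
  else ~~ all (fun w => (w \notin W) || (w \in Z)) (succs E v).
Definition ibc v := if owner v == a then 1 else (size (succs E v)).+1.

Lemma init_badE : init_bad owner E W Z a s = ([seq v <- enum Z | bad v], \sum_(v <- enum Z) ibc v).
Proof.
rewrite /init_bad; elim: (enum Z) => [|v l IH] /=; first by rewrite big_nil.
rewrite IH big_cons /bad /ibc.
case: (owner v == a) => /=.
  by case: (match s v with Some w => w \in Z | None => false end) => /=; rewrite add1n.
by case: all => /=; rewrite addnC.
Qed.


Hypothesis HZW : Z \subset W.
Hypothesis Hs : forall v w, s v = Some w -> E v w.

Definition dep u x := if owner u == a then s u == Some x else E u x.
Definition pc x := (size (preds E x)).+1.

Record PI (B : {set V}) (work : seq V) : Prop := {
  p1 : B \subset Z;
  p2 : forall X, ext_ok owner E W Z a s X -> forall x, x \in B -> x \notin X;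
  p3 : forall u, u \in Z -> u \notin B ->
        ~~ bad u /\ (forall x, x \in B -> x \notin work -> ~~ dep u x);
  p4 : {subset work <= B}
}.

Lemma extokP X : ext_ok owner E W Z a s X ->
  [/\ X \subset Z, forall v, v \in X -> owner v = a ->
      (if s v is Some w then w \in X else false) &
    forall v, v \in X -> owner v != a -> forall w, w \in W -> E v w -> w \in X].
Proof.
case/andP => HXZ /forallP H; split=> // v Hv; have := H v; rewrite Hv /=.
  by move=> + Ho; rewrite Ho eqxx.
move=> + Ho; rewrite (negbTE Ho) => /forallP H' w Hw Evw.
by have := H' w; rewrite Hw Evw.
Qed.

Lemma mem_preds u x : (u \in preds E x) = E u x.
Proof. by rewrite mem_filter mem_enum andbT. Qed.

Lemma mem_succs u x : (x \in succs E u) = E u x.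
Proof. by rewrite mem_filter mem_enum andbT. Qed.

Lemma propagate_ok fuel : forall B work c, size work + #|~: B| < fuel -> PI B work ->
  let: (B', c') := propagate owner E fuel Z a s B work c in
  PI B' [::] /\ c' <= c + \sum_(x <- work) pc x + \sum_(u | u \notin B) pc u.
Proof.
elim: fuel => [//|fuel IH] B work c Hlt HP /=.
case: work Hlt HP => [|x work'] Hlt HP.
  by split=> //; rewrite big_nil addn0 leq_addr.
set nw := [seq u <- preds E x | _].
have xB : x \in B by apply: (p4 HP); rewrite mem_head.
have xZ : x \in Z by apply: (subsetP (p1 HP)).
have xW : x \in W by apply: (subsetP HZW).
have mnw : forall u, (u \in nw) = [&& E u x, u \in Z, u \notin B & (owner u == a) ==> (s u == Some x)].
  by move=> u; rewrite mem_filter mem_preds andbC.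
have unw : uniq nw by rewrite filter_uniq // filter_uniq // enum_uniq.
set S := [set u in nw].
have SB : S \subset ~: B.
  by apply/subsetP => u; rewrite inE mnw inE => /and4P [].
have cardS : #|S| = size nw by rewrite cardsE; apply/card_uniqP.
have HS' : forall u, (u \notin B) && (u \in S) = (u \in nw).
  move=> u; case uS: (u \in S); last by rewrite andbF; move: uS; rewrite inE => ->.
  by have := subsetP SB u uS; rewrite inE => ->; move: uS; rewrite inE.
have Hcard : #|~: (B :|: S)| + size nw = #|~: B|.
  rewrite -cardS -(cardsID S (~: B)) (setIidPr SB) addnC; congr (_ + _).
  by rewrite setDE setCU.
have Hsum : \sum_(u | u \notin B) pc u = \sum_(u <- nw) pc u + \sum_(u | u \notin B :|: S) pc u.
  rewrite (bigID (fun u => u \in S)) /=; congr (_ + _).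
    by rewrite big_uniq //; apply: eq_bigl => u; rewrite HS'.
  by apply: eq_bigl => u; rewrite in_setU negb_or.
have HP' : PI (B :|: S) (nw ++ work').
  split.
  - by rewrite subUset (p1 HP) /=; apply/subsetP => u; rewrite inE mnw => /and4P [].
  - move=> X HX y; rewrite in_setU => /orP [/(p2 HP HX) //|].
    rewrite inE mnw => /and4P [Eyx yZ _ Hy]; apply/negP => yX.
    have [_ HXa HXn] := extokP HX.
    case Ho: (owner y == a) Hy => /= Hy.
      have := HXa y yX (eqP Ho); rewrite (eqP Hy) => xX.
      by have := p2 HP HX xB; rewrite xX.
    have xX := HXn y yX (negbT Ho) x xW Eyx.
    by have := p2 HP HX xB; rewrite xX.
  - move=> u uZ; rewrite in_setU negb_or => /andP [uB uS].
    have [nb Hd] := p3 HP uZ uB; split=> // y; rewrite in_setU mem_cat negb_or.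
    case/orP => [yB|]; last by rewrite inE => ->.
    case/andP => yS ywk.
    case: (y =P x) => [->|Nyx].
      rewrite /dep; apply/negP => Hdep; move: uS; rewrite inE mnw uZ uB /=.
      case Ho: (owner u == a) Hdep => /= Hdep.
        by rewrite Hdep (Hs (eqP Hdep)).
      by rewrite Hdep.
    by apply: Hd yB _; rewrite in_cons negb_or ywk andbT; apply/eqP.
  - move=> y; rewrite mem_cat in_setU => /orP [Hy|Hy].
      by rewrite inE Hy orbT.
    by rewrite (p4 HP) // in_cons Hy orbT.
have Hlt' : size (nw ++ work') + #|~: (B :|: S)| < fuel.
  by move: Hlt; rewrite size_cat /= -Hcard; lia.
have := IH (B :|: S) (nw ++ work') (c + (size (preds E x)).+1) Hlt' HP'.
case: propagate => B' c' [HP'' Hc]; split=> //.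
rewrite big_cat /= in Hc; rewrite big_cons Hsum; move: Hc; rewrite -/(pc x); lia.
Qed.

Lemma prop_final B : PI B [::] -> ext_Y owner E W Z a s = Z :\: B.
Proof.
move=> HP.
have ok : ext_ok owner E W Z a s (Z :\: B).
  apply/andP; split; first exact: subsetDl.
  apply/forallP => v; apply/implyP; rewrite inE => /andP [vB vZ].
  have [nb Hd] := p3 HP vZ vB; move: nb; rewrite /bad.
  have Hd' : forall x, x \in B -> ~~ dep v x by move=> x xB; apply: Hd.
  case Ho: (owner v == a) => /=.
    case Hsv: (s v) => [w|] //= /negPn wZ; rewrite inE wZ andbT.
    by apply/negP => wB; have := Hd' w wB; rewrite /dep Ho Hsv eqxx.
  move/negPn/allP => Hall; apply/forallP => w; apply/implyP => wW; apply/implyP => Evw.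
  have := Hall w; rewrite mem_succs Evw wW /= => /(_ isT) wZ.
  rewrite inE wZ andbT; apply/negP => wB; have := Hd' w wB.
  by rewrite /dep Ho Evw.
apply/setP => v; apply/bigcupP/idP => [[X HX vX]|vZB]; last by exists (Z :\: B).
have [HXZ _ _] := extokP HX; rewrite inE (subsetP HXZ v vX) andbT.
by apply/negP => vB; have := p2 HP HX vB; rewrite vX.
Qed.


Lemma prop_init : let B0 := [seq v <- enum Z | bad v] in
  [/\ PI [set x in B0] B0, size B0 + #|~: [set x in B0]| = #|V| &
      \sum_(x <- B0) pc x + \sum_(u | u \notin [set x in B0]) pc u = \sum_u pc u].
Proof.
move=> B0.
have uB0 : uniq B0 by rewrite filter_uniq // enum_uniq.
have mB0 : forall x, (x \in [set x in B0]) = bad x && (x \in Z).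
  by move=> x; rewrite inE mem_filter mem_enum.
split.
- split.
  + by apply/subsetP => x; rewrite mB0 => /andP [].
  + move=> X HX x; rewrite mB0 => /andP [bx xZ]; apply/negP => xX.
    have [HXZ HXa HXn] := extokP HX; move: bx; rewrite /bad.
    case Ho: (owner x == a) => /=.
      have := HXa x xX (eqP Ho); case: (s x) => // w wX.
      by rewrite (subsetP HXZ w wX).
    case/allPn => w; rewrite mem_succs => Exw; rewrite negb_or negbK => /andP [wW wZ].
    by have := HXn x xX (negbT Ho) w wW Exw => /(subsetP HXZ); rewrite (negbTE wZ).
  + by move=> u uZ; rewrite mB0 uZ andbT => nb; split=> // x; rewrite inE => ->.
  + by move=> y Hy; rewrite inE.
- have := cardsC [set x in B0]; rewrite cardsE; move/card_uniqP: uB0 => ->.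
  by [].
- rewrite [X in _ = X](bigID (fun u => u \in B0)) /= big_uniq //.
  by congr (_ + _); apply: eq_bigl => u; rewrite inE.
Qed.

Lemma Y_ok : let: (B0, c0) := init_bad owner E W Z a s in
  let: (B, c1) := propagate owner E #|V|.+1 Z a s [set x in B0] B0 c0 in
  ext_Y owner E W Z a s = Z :\: B /\ c1 <= (nedges E + #|V|).*2.
Proof.
rewrite init_badE.
have [HP Hm Hs'] := prop_init.
have Hlt : size [seq v <- enum Z | bad v] + #|~: [set x in [seq v <- enum Z | bad v]]| < #|V|.+1.
  by rewrite Hm.
have := propagate_ok (\sum_(v <- enum Z) ibc v) Hlt HP.
case: propagate => B c1 [HP' Hc]; split; first exact: prop_final HP'.
have H1 : \sum_(v <- enum Z) ibc v <= nedges E + #|V|.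
  have -> : nedges E + #|V| = \sum_v (size (succs E v)).+1.
    by rewrite /nedges; under [X in _ = X]eq_bigr do rewrite -addn1; rewrite big_split /= sum1_card.
  rewrite big_enum /=.
  apply: (@leq_trans (\sum_(v in Z) (size (succs E v)).+1)).
    by apply: leq_sum => v _; rewrite /ibc; case: (owner v == a).
  by rewrite [X in _ <= X](bigID (fun v => v \in Z)) /= leq_addr.
have H2 : \sum_u pc u = nedges E + #|V|.
  rewrite /pc; under eq_bigr do rewrite -addn1.
  by rewrite big_split /= sum_preds sum1_card.
move: Hc; rewrite -addnA Hs' H2 -addnn; lia.
Qed.

End Region.

Section Bottom.
Variable V : finType.
Variables (e : rel V) (nxt : V -> seq V) (Y : {set V}) (comps : seq (seq V)).
Hypothesis Hnx : forall u w, (w \in nxt u) = e u w.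
Hypothesis HY : forall u w, e u w -> u \in Y.
Hypothesis Hcomp : forall comp, comp \in comps ->
  exists v, forall x, (x \in comp) = connect (nr nxt) v x && connect (nr nxt) x v.
Hypothesis Hcov : forall x, x \in Y -> exists2 comp, comp \in comps & x \in comp.

Definition chk (comp : seq V) := let C := [set x in comp] in
  all (fun x => all (fun w => w \in C) (nxt x)) comp && has (fun x => nxt x != [::]) comp.

Lemma closed_conn (C : {set V}) x y : (forall x y, x \in C -> e x y -> y \in C) ->
  x \in C -> connect e x y -> y \in C.
Proof.
move=> Hc xC /connectP [p]; elim: p x xC => [|z p IH] x xC /=; first by move=> _ ->.
by case/andP => xz pz ly; apply: IH (Hc x z xC xz) pz ly.
Qed.

Lemma first_edge x y : connect e x y -> x != y -> exists z, e x z.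
Proof.
case/connectP => [[|z p]] /=; first by move=> _ ->; rewrite eqxx.
by case/andP => xz _ _ _; exists z.
Qed.

Lemma bottom_ok : [set C | C \in [seq [set x in comp] | comp <- comps & chk comp]]
  = [set C | is_bottom_scc e Y C].
Proof.
have Hce : forall x y, connect (nr nxt) x y = connect e x y.
  by apply: eq_connect => x y; rewrite /nr Hnx.
apply/setP => C; rewrite !inE; apply/idP/idP.
- case/mapP => comp; rewrite mem_filter => /andP [ch incomp] ->.
  have [v Hv] := Hcomp incomp.
  have Hv' : forall x, (x \in [set x in comp]) = connect e v x && connect e x v.
    by move=> x; rewrite inE Hv !Hce.
  move: ch => /andP [/allP Hcl /hasP [x0 x0c Hne]].
  have closedC : forall x y, x \in [set x in comp] -> e x y -> y \in [set x in comp].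
    by move=> x y; rewrite inE => xc; have := allP (Hcl x xc) y; rewrite Hnx.
  have [w0 Hw0] : exists w0, e x0 w0.
    by case E0: (nxt x0) Hne => [|w0 ws] // _; exists w0; rewrite -Hnx E0 mem_head.
  have x0C : x0 \in [set x in comp] by rewrite inE.
  apply/and5P; split.
  + by apply/set0Pn; exists x0.
  + apply/subsetP => x xC.
    case: (x =P x0) => [->|/eqP Nx]; first exact: HY Hw0.
    have : connect e x x0.
      move: xC x0C; rewrite !Hv' => /andP [_ xv] /andP [vx0 _].
      exact: connect_trans xv vx0.
    by case/first_edge => // z; apply: HY.
  + apply/forallP => u; apply/implyP => uC; apply/forallP => w; apply/implyP => wC.
    move: uC wC; rewrite !Hv' => /andP [_ uv] /andP [vw _].
    exact: connect_trans uv vw.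
  + apply/forallP => u; apply/implyP => uC; apply/forallP => w; apply/implyP => uw.
    exact: closed_conn closedC uC uw.
  + apply/existsP; exists x0; rewrite x0C /=; apply/existsP; exists w0.
    by rewrite Hw0 andbT (closedC x0 w0).
- case/and5P => Cn CY /forallP Hsc /forallP Hcl.
  case/existsP => u /andP [uC /existsP [w /andP [wC euw]]].
  have [comp incomp uc] := Hcov (HY euw).
  have [v Hv] := Hcomp incomp.
  have Hsc' : forall x y, x \in C -> y \in C -> connect e x y.
    by move=> x y xC yC; have := Hsc x; rewrite xC /= => /forallP /(_ y); rewrite yC.
  have Hcl' : forall x y, x \in C -> connect e x y -> y \in C.
    by move=> x y xC xy; have := Hcl x; rewrite xC /= => /forallP /(_ y); rewrite xy.
  have EC : C = [set x in comp].
    apply/setP => x; rewrite inE Hv !Hce; move: uc; rewrite Hv !Hce => /andP [vu uv].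
    apply/idP/idP => [xC|/andP [vx xv]].
      by rewrite (connect_trans vu (Hsc' u x uC xC)) (connect_trans (Hsc' x u xC uC) uv).
    exact: Hcl' uC (connect_trans uv vx).
  apply/mapP; exists comp => //; rewrite mem_filter incomp andbT.
  apply/andP; split.
  + apply/allP => x xc; apply/allP => y; rewrite Hnx => exy; rewrite -EC.
    by apply: Hcl' (connect1 exy); rewrite EC inE.
  + apply/hasP; exists u => //; apply/eqP => H; have := Hnx u w.
    by rewrite H euw in_nil.
Qed.

End Bottom.

Section SR.
Variable V : finType.
Variable owner : V -> bool.
Variable E : rel V.
Variables (W Z : {set V}) (a : bool) (s : V -> option V).
Hypothesis HZW : Z \subset W.
Hypothesis Hs : forall v w, s v = Some w -> E v w.

Lemma ext_edgeE Y u w : ext_edge owner E W Y a s u w -> E u w /\ u \in Y.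
Proof.
case/and3P => uY _; case: (owner u == a) => [/eqP /Hs|/andP [_]] //.
Qed.

Lemma search_region_ok :
  let: (out, c) := search_region owner E W Z a s in
  [set C | C \in out] = extract_tangles owner E W Z a s /\
  c <= 20 * (nedges E + #|V|).
Proof.
rewrite /search_region.
have := Y_ok owner a HZW Hs; rewrite init_badE; case: propagate => B c1 [HY Hc1].
set Y := Z :\: B.
set e := ext_edge owner E W Y a s.
have He : forall u w, e u w -> E u w /\ u \in Y by move=> u w /ext_edgeE.
have Hnx : forall u w, (w \in hnext owner E W Y a s u) = e u w.
  move=> u w; rewrite /hnext mem_filter mem_succs.
  by apply/andP/idP => [[]|H] //; split=> //; case: (He u w H).
have Hrev : forall x y, (y \in hrnext owner E W Y a s x) = (x \in hnext owner E W Y a s y).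
  move=> x y; rewrite Hnx /hrnext mem_filter mem_preds.
  by apply/andP/idP => [[]|H] //; split=> //; case: (He y x H).
have Hn1 : \sum_u size (hnext owner E W Y a s u) <= nedges E.
  by apply: leq_sum => u _; rewrite /hnext size_filter count_size.
have Hn2 : \sum_u scost E u <= nedges E by [].
have Hn1' : \sum_u size (hrnext owner E W Y a s u) <= nedges E.
  rewrite -sum_preds; apply: leq_sum => u _; rewrite /hrnext size_filter count_size //.
have Hn2' : \sum_u pcost E u <= nedges E by rewrite -sum_preds.
have := pass1_ok (enum Y) Hn1 Hn2.
case: pass1 => order c3 [Hu Hsub Hordp Hc3].
have Hedge : forall x y, y \in hnext owner E W Y a s x -> x \in order.
  by move=> x y; rewrite Hnx => /He [_ xY]; apply: Hsub; rewrite mem_enum.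
have := pass2_ok Hrev Hordp Hedge Hn1' Hn2'.
case: pass2 => comps c4 [Hcomp Hcov Hfl Hc4]; split.
  rewrite /extract_tangles HY -/Y -/e.
  apply: (bottom_ok (nxt := hnext owner E W Y a s)) => //.
  - by move=> u w /He [].
  - by move=> x xY; apply: Hcov; apply: Hsub; rewrite mem_enum.
have sY : size (enum Y) <= #|V| by rewrite -cardE max_card.
have so : size order <= #|V|.
  by rewrite -(card_uniqP Hu); apply: max_card.
have F1 : \sum_w fw (hnext owner E W Y a s) (scost E) w <= (nedges E).*2 + #|V|.
  by rewrite sum_fw; move: Hn1 Hn2; rewrite -addnn; lia.
have F2 : \sum_w fw (hrnext owner E W Y a s) (pcost E) w <= (nedges E).*2 + #|V|.
  by rewrite sum_fw; move: Hn1' Hn2'; rewrite -addnn; lia.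
have F3 : \sum_(comp <- comps) \sum_(x <- comp) (scost E x).+1 <= nedges E + #|V|.
  rewrite -big_flatten /= big_uniq //.
  apply: (@leq_trans (\sum_x (scost E x).+1)).
    by rewrite [X in _ <= X](bigID (fun x => x \in flatten comps)) /= leq_addr.
  by under eq_bigr do rewrite -addn1; rewrite big_split /= sum1_card.
have F4 : #|Y| <= #|V| by apply: max_card.
have F5 : #|Z| <= #|V| by apply: max_card.
move: Hc1 Hc3 Hc4 F1 F2 F3 F4 F5 sY so; rewrite -!addnn; lia.
Qed.

End SR.

Section Search.
Variable V : finType.
Variable owner : V -> bool.
Variable E : rel V.
Variable pr : V -> nat.
Variable T : seq {set V}.

Lemma tattr_sub (W : {set V}) T' a (A : {set V}) : A \subset W -> tattr owner E pr W T' a A \subset W.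
Proof.
move=> AW; apply: bigcap_inf; rewrite subxx /= /tattr_closed AW /=.
apply/and3P; split.
- by apply/forallP => v; apply/implyP => vW; apply/implyP.
- by apply/forallP => v; apply/implyP => vW; apply/implyP.
- by apply/allP => t _; apply/implyP => /and4P [].
Qed.

Lemma tattr_sup W T' a (A : {set V}) : A \subset tattr owner E pr W T' a A.
Proof. by apply/bigcapsP => Z /andP [_ /and4P []]. Qed.

Definition Kr := 20 * (nedges E + #|V|) + #|V|.+1.

Lemma search_ok : forall rs W, is_decomp_from owner E pr T W rs ->
  map (fun out => [set C | C \in out]) (search owner E W rs).1 = extract_all owner E W rs /\
  (search owner E W rs).2 <= size rs * Kr + 1.
Proof.
elim=> [|r rs IH] W /=; first by [].
set p := maxpr pr W; set A := [set v in W | pr v == p].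
case=> Wn pl Hset [Hs1 _] Hrest.
have HZW : rset r \subset W.
  by rewrite Hset; apply: tattr_sub; apply/subsetP => v; rewrite inE => /andP [].
have Hs : forall v w, rstrat r v = Some w -> E v w by move=> v w /Hs1 [].
have := search_region_ok owner (rplayer r) HZW Hs.
case: search_region => out c [H1 H2].
have := IH _ Hrest; case: search => outs c' [H3 H4] /=.
split; first by rewrite H1 H3.
have HK : 20 * (nedges E + #|V|) + #|rset r|.+1 <= Kr by rewrite /Kr leq_add2l ltnS max_card.
by rewrite mulSn; move: H2 H4 HK => /=; lia.
Qed.

Lemma size_decomp : forall rs W, is_decomp_from owner E pr T W rs -> size rs <= (maxpr pr W).+1.
Proof.
elim=> [|r rs IH] W //=.
set p := maxpr pr W; set A := [set v in W | pr v == p].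
case=> Wn pl Hset _ Hrest.
case: rs IH Hrest => [//|r' rs'] IH Hrest.
have := IH _ Hrest; move: Hrest => /= [Wn' _ _ _ _] H.
suff : maxpr pr (W :\: rset r) < p by move: H; lia.
have [v vW' ->] : {v : V | v \in W :\: rset r & maxpr pr (W :\: rset r) = pr v}.
  apply: eq_bigmax_cond; rewrite card_gt0; exact: Wn'.
move: vW'; rewrite inE => /andP [vZ vW].
have vp : pr v <= p by apply: leq_bigmax_cond.
rewrite ltn_neqAle vp andbT.
apply/negP => /eqP Ev; move: vZ; rewrite Hset.
by rewrite (subsetP (tattr_sup _ _ _ _)) // inE vW Ev eqxx.
Qed.

End Search.
Unset Implicit Arguments.

Theorem lemma12 : exists c : nat,
  forall (V : finType) (owner : V -> bool) (E : rel V) (pr : V -> nat) (d : nat),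
  (forall v, pr v <= d) ->
  (forall v, exists w, E v w) ->
  forall T : seq {set V},
  (forall t, t \in T -> exists s, is_tangle owner E pr t s) ->
  forall rs : seq (region V), is_decomp owner E pr T rs ->
  map (fun out => [set C | C \in out]) (search owner E setT rs).1
    = extract_all owner E setT rs /\
  (search owner E setT rs).2 <= c * (d.+1 * #|[pred p : V * V | E p.1 p.2]|) + c.
Proof.
exists 42 => V owner E pr d Hd Hsucc T _ rs Hdec.
have [H1 H2] := search_ok Hdec; split => //; clear H1.
rewrite -nedges_card.
have Hn := card_le_nedges Hsucc.
have HN : size rs <= d.+1.
  apply: leq_trans (size_decomp Hdec) _; rewrite ltnS.
  by apply/bigmax_leqP => v _.
move: H2; rewrite /Kr.
case: rs Hdec HN => [|r rs] Hdec HN; first by rewrite mul0n; lia.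
have Hm : 0 < nedges E.
  case: Hdec => Wn _ _ _ _; apply: leq_trans Hn.
  by have [v _] := set0Pn _ Wn; apply/card_gt0P; exists v.
have HK : 20 * (nedges E + #|V|) + #|V|.+1 <= 42 * nedges E by lia.
set N := size (r :: rs); set X := 20 * (nedges E + #|V|) + #|V|.+1 => H2.
have : N * X <= d.+1 * (42 * nedges E) by apply: leq_mul.
rewrite mulnCA; lia.
Qed.
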